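(* Let $p(bc\mid yz)$ be a bipartite conditional probability distribution with binary settings $y,z\in\{0,1\}$ and binary outcomes $b,c\in\{0,1\}$ which is nonsignalling, i.e. $\sum_c p(bc\mid yz)$ does not depend on $z$ and $\sum_b p(bc\mid yz)$ does not depend on $y$. Then $$\frac14\sum_{y,z\in\{0,1\}} p(b\oplus c = yz\mid yz) \;\leq\; \frac54 - \frac12\, p(b=0\mid y=0),$$ where $p(b=0\mid y=0)=\sum_c p(b=0,c\mid y=0,z)$ (independent of $z$ by nonsignalling).
   Context: $\oplus$ denotes addition modulo 2, and $p(b\oplus c = yz\mid yz)=\sum_{b,c:\, b\oplus c = yz} p(bc\mid yz)$. *)

(* Defs.v *)
(* A bipartite conditional distribution with binary settings
   and outcomes is a function p b c y z (outcomes b c, settings y z), 0 = false. *)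
From mathcomp Require Import all_boot all_order all_algebra.
Set Implicit Arguments. Unset Strict Implicit. Unset Printing Implicit Defensive.
Import Order.TTheory GRing.Theory Num.Theory.
Local Open Scope ring_scope.

Definition cond_prob (R : realFieldType) (p : bool -> bool -> bool -> bool -> R) : Prop :=
  (forall b c y z, 0 <= p b c y z) /\
  (forall y z, \sum_(b : bool) \sum_(c : bool) p b c y z = 1).

Definition nonsignalling (R : realFieldType) (p : bool -> bool -> bool -> bool -> R) : Prop :=
  (forall b y z z', \sum_(c : bool) p b c y z = \sum_(c : bool) p b c y z') /\
  (forall c z y y', \sum_(b : bool) p b c y z = \sum_(b : bool) p b c y' z).

Definition p_win (R : realFieldType) (p : bool -> bool -> bool -> bool -> R) (y z : bool) : R :=
  \sum_(b : bool) \sum_(c : bool | addb b c == (y && z)) p b c y z.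

(* p(b = 0 | y = 0), computed at z = 0 (independent of z by nonsignalling) *)
Definition pA0 (R : realFieldType) (p : bool -> bool -> bool -> bool -> R) : R :=
  \sum_(c : bool) p false c false false.

(* Main.v *)
Require Import Defs.
From mathcomp Require Import all_boot all_order all_algebra.
From mathcomp Require Import lra.
Import Order.TTheory GRing.Theory Num.Theory.
Local Open Scope ring_scope.

Lemma bigb (R : realFieldType) (P : pred bool) (F : bool -> R) :
  \sum_(c | P c) F c = (if P true then F true else 0) + (if P false then F false else 0).
Proof. by rewrite big_mkcond big_bool. Qed.

Theorem lemma1 (R : realFieldType) (p : bool -> bool -> bool -> bool -> R) :
  cond_prob p -> nonsignalling p ->
  4^-1 * (\sum_(y : bool) \sum_(z : bool) p_win p y z) <= 5 / 4 - 2^-1 * pA0 p.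
Proof.
move=> [Hp Hs] [Ha Hb].
rewrite /p_win /pA0.
rewrite !big_bool /= !big_mkcond /= !big_bool /=.
have := Hs false false; have := Hs false true; have := Hs true false; have := Hs true true.
have := Ha false false false true; have := Hb false false false true.
have := Ha false true false true; have := Hb false true false true.
have := Ha true false false true; have := Hb true false false true.
have := Ha true true false true; have := Hb true true false true.
rewrite !big_bool /= => *.
have := Hp false false false false; have := Hp false true false false;
have := Hp true false false false; have := Hp true true false false;
have := Hp false false false true; have := Hp false true false true;
have := Hp true false false true; have := Hp true true false true;
have := Hp false false true false; have := Hp false true true false;
have := Hp true false true false; have := Hp true true true false;
have := Hp false false true true; have := Hp false true true true;
have := Hp true false true true; have := Hp true true true true.
move=> *.
rewrite !bigb /= ?addr0 ?add0r. lra.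
Qed.
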